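(* Let $S_0,S_1,S_2$ be pair-partitions of $[2k]$, $\lambda$ a Young diagram, and $f:[2k]\to 2\lambda$ a function with $f(i)=f(j)$ for some $i\neq j$. Let $S_0'=(i\ j)\cdot S_0$. Then (a) $f$ satisfies conditions (P0), (P1), (P2) with respect to $(S_0,S_1,S_2)$ if and only if it satisfies them with respect to $(S_0',S_1,S_2)$; (b) if these conditions are satisfied, then $(-1)^{\mathcal{L}(S_0,S_1)}+(-1)^{\mathcal{L}(S_0',S_1)}=0$.
   Context: Pair-partitions of $[2k]$ are sets of disjoint two-element subsets with union $[2k]$, identified with fixed-point-free involutions; for a permutation $\sigma$, $\sigma\cdot P$ has pair $\{\sigma(a),\sigma(b)\}$ iff $\{a,b\}\in P$, and $(i\ j)$ is the transposition. $\mathcal{L}(A,B)$ is the bipartite graph with a black vertex per pair of $A$, a white vertex per pair of $B$, and an edge for each $a\in[2k]$ joining the pairs containing $a$; it is a union of loops, $|\mathcal{L}(A,B)|$ is the number of loops and $(-1)^{\mathcal{L}(A,B)}=(-1)^{k-|\mathcal{L}(A,B)|}$. $2\lambda=(2\lambda_1,2\lambda_2,\dots)$; two boxes of $2\lambda$ are neighbors if in the same row and in columns $2m+1$, $2m+2$ for some $m\ge0$. The conditions, for all $l\in[2k]$: (P0) $f(l)$ and $f(S_0(l))$ are neighbors; (P1) $f(l)$ and $f(S_0\circ S_1(l))$ are in the same column; (P2) $f(l)$ and $f(S_2(l))$ are in the same row. *)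

(* Defs.v *)
From mathcomp Require Import all_boot all_order all_algebra all_fingroup.
Set Implicit Arguments. Unset Strict Implicit. Unset Printing Implicit Defensive.

(* Pair-partitions of [2k] = 'I_(2*k), identified with fixed-point-free involutions. *)
Definition is_pairing (k : nat) (P : {perm 'I_(2 * k)}) : bool :=
  [forall x, (P x != x) && (P (P x) == x)].

(* Action sigma . P = sigma o P o sigma^{-1}: pair {sigma a, sigma b} iff {a,b} in P.
   In mathcomp (s * t) x = t (s x), so sigma o P o sigma^-1 = sigma^-1 * P * sigma. *)
Definition pp_act (k : nat) (sigma P : {perm 'I_(2 * k)}) : {perm 'I_(2 * k)} :=
  (sigma^-1 * P * sigma)%g.

(* The graph L(A,B): black vertices = pairs of A, white = pairs of B, one edge per
   a in [2k] joining the A-pair and the B-pair containing a.  Two edges a, b share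
   an endpoint iff b = A a (same black vertex) or b = B a (same white vertex).
   Every vertex has degree 2, so loops = connected components, counted here as the
   connected classes of edges. *)
Definition edge_adj (k : nat) (A B : {perm 'I_(2 * k)}) : rel 'I_(2 * k) :=
  fun a b => (b == A a) || (b == B a).

Definition nloops (k : nat) (A B : {perm 'I_(2 * k)}) : nat :=
  n_comp (edge_adj A B) predT.

Definition loop_sign (k : nat) (A B : {perm 'I_(2 * k)}) : int :=
  ((-1) ^+ (k - nloops A B))%R.

Definition young (lam : seq nat) : bool :=
  sorted geq lam && all (fun r => 0 < r) lam.

(* Boxes of 2*lambda, 0-indexed (row, column): row r < #rows, column c < 2*lam_r. *)
Definition in_double (lam : seq nat) (b : nat * nat) : bool :=
  (b.1 < size lam) && (b.2 < 2 * nth 0 lam b.1).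

(* Neighbours: same row, columns 2m+1, 2m+2 (1-indexed) = 2m, 2m+1 (0-indexed). *)
Definition neighbors (b c : nat * nat) : bool :=
  (b.1 == c.1) && (b.2./2 == c.2./2) && (b.2 != c.2).

Definition condP0 (k : nat) (f : 'I_(2 * k) -> nat * nat) (S0 : {perm 'I_(2 * k)}) :=
  forall l, neighbors (f l) (f (S0 l)).
Definition condP1 (k : nat) (f : 'I_(2 * k) -> nat * nat) (S0 S1 : {perm 'I_(2 * k)}) :=
  forall l, (f l).2 = (f (S0 (S1 l))).2.
Definition condP2 (k : nat) (f : 'I_(2 * k) -> nat * nat) (S2 : {perm 'I_(2 * k)}) :=
  forall l, (f l).1 = (f (S2 l)).1.

Definition conds (k : nat) (f : 'I_(2 * k) -> nat * nat) (S0 S1 S2 : {perm 'I_(2 * k)}) :=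
  [/\ condP0 f S0, condP1 f S0 S1 & condP2 f S2].

(* Main.v *)
Require Import Defs.
From mathcomp Require Import all_boot all_order all_algebra all_fingroup.
Set Implicit Arguments. Unset Strict Implicit. Unset Printing Implicit Defensive.
Import GRing.Theory.

Local Open Scope group_scope.
Section Loops.
Variable k : nat.
Local Notation T := 'I_(2*k).
Variables (A B : {perm T}) (E : {set T}).
Hypothesis hA : forall x, (A x \in E) = (x \notin E).
Hypothesis hB : forall x, (B x \in E) = (x \notin E).
Hypothesis hAA : forall x, A (A x) = x.
Hypothesis hBB : forall x, B (B x) = x.

Definition rho_fun x := if x \in E then B (A x) else x.

Lemma rho_funE x : (rho_fun x \in E) = (x \in E).
Proof. by rewrite /rho_fun; case: ifP => // xE; rewrite hB hA xE. Qed.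

Lemma rho_inj : injective rho_fun.
Proof.
move=> x y eq; have := rho_funE x; rewrite eq rho_funE => exy.
move: eq; rewrite /rho_fun -exy; by case: ifP => // _ /perm_inj /perm_inj.
Qed.

Definition rho : {perm T} := perm rho_inj.
Lemma rhoE x : rho x = rho_fun x. Proof. by rewrite permE. Qed.

Let e := edge_adj A B.

Lemma e_sym : symmetric e.
Proof.
move=> x y; rewrite /e /edge_adj.
have h (P : {perm T}) : (forall z, P (P z) = z) -> (y == P x) = (x == P y).
  by move=> PP; apply/eqP/eqP => ->.
by rewrite (h A hAA) (h B hBB).
Qed.

Lemma csym : connect_sym e.
Proof. exact: sym_connect_sym e_sym. Qed.

Lemma porbit_step (s : {perm T}) x z : (s z \in porbit s x) = (z \in porbit s x).
Proof.
have := porbit_perm s 1 z; rewrite expg1 => h.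
by rewrite -!eq_porbit_mem h.
Qed.

Lemma orbit_in x : x \in E -> porbit rho x = [set y in E | connect e x y].
Proof.
move=> xE; apply/setP => y; rewrite inE; apply/idP/idP.
  case/porbitP => n ->; elim: n => [|n /andP[IH1 IH2]].
    by rewrite expg0 perm1 xE connect0.
  rewrite expgSr permM rhoE /rho_fun IH1 hB hA IH1 /=.
  set z := (rho ^+ n) x.
  have h1 : e z (A z) by rewrite /e /edge_adj eqxx.
  have h2 : e (A z) (B (A z)) by rewrite /e /edge_adj eqxx orbT.
  exact: connect_trans IH2 (connect_trans (connect1 h1) (connect1 h2)).
case/andP => yE cxy.
pose P := [pred z | if z \in E then z \in porbit rho x else A z \in porbit rho x].
have clP : closed e P.
  apply: (intro_closed csym) => z w; rewrite /e /edge_adj /P inE.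
  case/orP => /eqP ->; case zE: (z \in E) => Hz; rewrite inE /=.
  - by rewrite hA zE hAA.
  - by rewrite hA zE.
  - rewrite hB zE /=; rewrite -(porbit_step rho) rhoE /rho_fun.
    by rewrite hA hB zE /= hAA hBB.
  - rewrite hB zE /=.
    have -> : B z = rho (A z) by rewrite rhoE /rho_fun hA zE hAA.
    by rewrite porbit_step.
have := closed_connect clP cxy; rewrite /P !inE xE yE porbit_id.
by move<-.
Qed.

Lemma orbit_out x : x \notin E -> porbit rho x = [set x].
Proof.
move=> xE; apply/setP => y; rewrite inE; apply/porbitP/eqP => [[n ->]|->].
  elim: n => [|n IH]; first by rewrite expg0 perm1.
  by rewrite expgSr permM IH rhoE /rho_fun (negbTE xE).
by exists 0; rewrite expg0 perm1.
Qed.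

Definition cls x := [set y | connect e x y].

Lemma cls_eq x y : connect e x y -> cls x = cls y.
Proof.
move=> cxy; apply/setP=> z; rewrite !inE; apply/idP/idP => h.
  by apply: connect_trans h; rewrite csym.
exact: connect_trans cxy h.
Qed.

Lemma rep x : exists2 x', x' \in E & connect e x x'.
Proof.
case xE: (x \in E); first by exists x => //; exact: connect0.
exists (A x); first by rewrite hA xE.
by apply: connect1; rewrite /e /edge_adj eqxx.
Qed.

Lemma card_cls : #|[set cls x | x : T]| = n_comp e predT.
Proof.
rewrite /n_comp_mem.
have -> : [set cls x | x : T] = cls @: [set x | roots e x].
  apply/setP => C; apply/imsetP/imsetP => [[x _ ->]|[x _ ->]]; last by exists x.
  exists (fingraph.root e x); first by rewrite inE roots_root //; exact: csym.
  by apply: cls_eq; exact: connect_root.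
rewrite card_in_imset; first by apply: eq_card => x; rewrite !inE andbT.
move=> r1 r2; rewrite !inE => /eqP h1 /eqP h2 hc.
have : r2 \in cls r1 by rewrite hc inE connect0.
by rewrite inE => /(fingraph.rootP csym); rewrite h1 h2.
Qed.

Lemma card_in : #|porbit rho @: E| = #|[set cls x | x : T]|.
Proof.
have -> : porbit rho @: E = (fun C => C :&: E) @: [set cls x | x : T].
  apply/setP => OO; apply/imsetP/imsetP.
  - case=> x xE ->; exists (cls x); first exact: imset_f.
    by rewrite orbit_in //; apply/setP=> y; rewrite !inE andbC.
  - case=> C /imsetP[x _ ->] ->; have [x' x'E cxx'] := rep x.
    exists x' => //; rewrite orbit_in // (cls_eq cxx').
    by apply/setP=> y; rewrite !inE andbC.
rewrite card_in_imset //.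
move=> C1 C2 /imsetP[x _ ->] /imsetP[y _ ->] h.
have [x' x'E cxx'] := rep x.
have : x' \in cls x :&: E by rewrite !inE cxx' x'E.
rewrite h !inE x'E andbT => cyx'.
by rewrite (cls_eq cxx') (cls_eq cyx').
Qed.

Lemma card_out : #|porbit rho @: ~: E| = #|~: E|.
Proof.
rewrite card_in_imset // => x y; rewrite !inE => xE yE.
by rewrite !orbit_out // => /set1_inj.
Qed.

Lemma porbits_card : #|porbits rho| = n_comp e predT + #|~: E|.
Proof.
have -> : porbits rho = porbit rho @: (E :|: ~: E).
  by rewrite setUCr /porbits; apply/setP => OO; apply/imsetP/imsetP => -[x _ ->]; exists x.
rewrite imsetU cardsU.
have -> : (porbit rho @: E) :&: (porbit rho @: ~: E) = set0.
  apply/setP => O; rewrite !inE; apply/negbTE/andP => -[/imsetP[x xE ->] /imsetP[y yE]].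
  have yE2 : y \notin E by rewrite inE in yE.
  rewrite [porbit rho y]orbit_out //.
  move=> h; have : x \in porbit rho x := porbit_id rho x.
  by rewrite h inE => /eqP exy; by move: yE2; rewrite -exy xE.
by rewrite cards0 subn0 card_in card_cls card_out.
Qed.

Lemma cardE : #|E| = #|~: E|.
Proof.
apply/eqP; rewrite eqn_leq; apply/andP; split.
  rewrite -(card_imset E (@perm_inj _ A)); apply: subset_leq_card.
  by apply/subsetP => _ /imsetP[x xE ->]; rewrite inE hA negbK.
rewrite -(card_imset (~: E) (@perm_inj _ A)); apply: subset_leq_card.
by apply/subsetP => _ /imsetP[x xE ->]; rewrite hA; rewrite inE in xE.
Qed.

Lemma cardCE : #|~: E| = k.
Proof.
have := cardsC E; rewrite cardE card_ord addnn -mul2n => /eqP.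
by rewrite eqn_mul2l /= => /eqP.
Qed.

Lemma loops_parity : odd_perm rho = odd (nloops A B + k) /\ nloops A B <= k.
Proof.
have h := porbits_card; rewrite cardCE in h.
split; first by rewrite /odd_perm card_ord h /nloops oddM.
have := leq_imset_card (porbit rho) (mem 'I_(2 * k)).
rewrite -/(porbits rho) h card_ord /nloops.
move=> H; have : n_comp e predT + k <= k + k by rewrite addnn -mul2n.
by rewrite leq_add2r.
Qed.
End Loops.
Lemma half_odd_eq m n : m./2 = n./2 -> odd m = odd n -> m = n.
Proof. by move=> h1 h2; rewrite -(odd_double_half m) -(odd_double_half n) h1 h2. Qed.

Lemma nb_odd b c : neighbors b c -> odd c.2 = ~~ odd b.2.
Proof.
case/andP => /andP[_ /eqP h] ne.
case E1: (odd c.2); case E2: (odd b.2) => //;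
  by move: ne; rewrite (half_odd_eq (esym h)) ?E1 ?E2 // eqxx.
Qed.

Lemma nb_uniq b c d : neighbors b c -> neighbors b d -> c = d.
Proof.
move=> hc hd; have oc := nb_odd hc; have od := nb_odd hd.
case/andP: hc => /andP[/eqP c1 /eqP c2] _; case/andP: hd => /andP[/eqP d1 /eqP d2] _.
case: c c1 c2 oc => c1' c2'; case: d d1 d2 od => d1' d2' /= -> h2 od -> h2' oc.
by rewrite (@half_odd_eq c2' d2') // ?oc ?od // -h2 -h2'.
Qed.

Lemma pp_actE k (s P : {perm 'I_(2*k)}) x : pp_act s P x = s (P (s^-1 x)).
Proof. by rewrite /pp_act !permM. Qed.

Lemma perm_tperm (T : finType) (P : {perm T}) i j y :
  P (tperm i j y) = tperm (P i) (P j) (P y).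
Proof.
case: tpermP => [->|->|ne1 ne2]; rewrite ?tpermL ?tpermR //.
by rewrite tpermD // (inj_eq perm_inj) eq_sym; apply/eqP.
Qed.

Lemma ftperm k (f : 'I_(2 * k) -> nat * nat) i j :
  f i = f j -> forall x, f (tperm i j x) = f x.
Proof. by move=> fij x; case: tpermP => // ->. Qed.

Lemma conds_tr k (f : 'I_(2 * k) -> nat * nat) S S1 S2 i j :
  f i = f j -> conds f S S1 S2 -> conds f (pp_act (tperm i j) S) S1 S2.
Proof.
move=> fij [h0 h1 h2].
have ft := ftperm fij.
have SE x : pp_act (tperm i j) S x = tperm i j (S (tperm i j x))
  by rewrite pp_actE tpermV.
have fS x : f (pp_act (tperm i j) S x) = f (S x).
  rewrite SE ft; apply: nb_uniq (h0 _); have := h0 (tperm i j x); by rewrite ft.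
split.
- by move=> l; rewrite SE ft; have := h0 (tperm i j l); rewrite ft.
- by move=> l; rewrite fS.
- exact h2.
Qed.

Theorem lemma3p8 (k : nat) (S0 S1 S2 : {perm 'I_(2 * k)}) (lam : seq nat)
    (f : 'I_(2 * k) -> nat * nat) (i j : 'I_(2 * k)) :
  is_pairing S0 -> is_pairing S1 -> is_pairing S2 -> young lam ->
  (forall l, in_double lam (f l)) ->
  i != j -> f i = f j ->
  (conds f S0 S1 S2 <-> conds f (pp_act (tperm i j) S0) S1 S2) /\
  (conds f S0 S1 S2 ->
     (loop_sign S0 S1 + loop_sign (pp_act (tperm i j) S0) S1 = 0)%R).
Proof.
move=> pS0 pS1 pS2 _ _ nij fij.
have ft := ftperm fij.
have back : pp_act (tperm i j) (pp_act (tperm i j) S0) = S0.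
  by apply/permP => x; rewrite !pp_actE tpermV !tpermK.
split.
  split; first exact: conds_tr.
  by move=> h; have := conds_tr fij h; rewrite back.
move=> hc; have hc' := conds_tr fij hc.
set S0' := pp_act (tperm i j) S0 in hc' *.
have inv (P : {perm 'I_(2 * k)}) : is_pairing P -> forall x, P (P x) = x.
  by move=> /forallP h x; case/andP: (h x) => _ /eqP.
pose E := [set x | ~~ odd (f x).2].
have hEf x : (x \in E) = ~~ odd (f x).2 by rewrite inE.
have hA P : conds f P S1 S2 -> forall x, (P x \in E) = (x \notin E).
  by move=> [h0 _ _] x; rewrite !hEf (nb_odd (h0 x)) negbK.
have hB x : (S1 x \in E) = (x \notin E).
  case: hc => h0 h1 _; rewrite !hEf; have := h1 (S1 x); rewrite (inv _ pS1) => ->.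
  by rewrite (nb_odd (h0 x)) negbK.
have hAA := inv _ pS0.
have hAA' x : S0' (S0' x) = x.
  by rewrite /S0' !pp_actE tpermV tpermK hAA tpermK.
have hBB := inv _ pS1.
have [par1 le1] := loops_parity (hA _ hc) hB hAA hBB.
have [par2 le2] := loops_parity (hA _ hc') hB hAA' hBB.
have fE x : (tperm i j x \in E) = (x \in E) by rewrite !hEf ft.
have key : odd_perm (rho (hA _ hc') hB) = ~~ odd_perm (rho (hA _ hc) hB).
  case iE: (i \in E).
  - have jE : j \in E by rewrite hEf -fij -hEf.
    have -> : rho (hA _ hc') hB = (tperm i j * rho (hA _ hc) hB)%g.
      apply/permP => x; rewrite permM !rhoE /rho_fun fE.
      case xE: (x \in E).
        rewrite /S0' pp_actE tpermV; congr (S1 _); apply: tpermD.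
          by apply/eqP => e; move: iE; rewrite e (hA _ hc) fE xE.
        by apply/eqP => e; move: jE; rewrite e (hA _ hc) fE xE.
      by rewrite tpermD //; apply/eqP => e; move: xE; rewrite -e ?iE ?jE.
    by rewrite odd_permM odd_tperm nij.
  - have jE : (j \in E) = false by rewrite hEf -fij -hEf.
    have -> : rho (hA _ hc') hB = (rho (hA _ hc) hB * tperm (S1 i) (S1 j))%g.
      apply/permP => x; rewrite permM !rhoE /rho_fun.
      case xE: (x \in E).
        rewrite /S0' pp_actE tpermV [tperm i j x]tpermD; first by rewrite perm_tperm.
          by apply/eqP => e; move: iE; rewrite e xE.
        by apply/eqP => e; move: jE; rewrite e xE.
      rewrite tpermD //; apply/eqP => e; move: xE; rewrite -e hB ?iE ?jE //.
    by rewrite odd_permM odd_tperm (inj_eq perm_inj) nij addbT.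
have o1 : odd (k - nloops S0 S1) = odd_perm (rho (hA _ hc) hB).
  by rewrite oddB // par1 oddD addbC.
have o2 : odd (k - nloops S0' S1) = odd_perm (rho (hA _ hc') hB).
  by rewrite oddB // par2 oddD addbC.
rewrite /loop_sign -[((-1) ^+ (k - nloops S0' S1))%R]signr_odd o2 key -o1.
rewrite -[((-1) ^+ (k - nloops S0 S1))%R]signr_odd.
by case: (odd _); rewrite /= ?expr0 ?expr1 ?addrN ?addNr.
Qed.
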